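(* Every ultra-metric space is isometric to a closed subset of an ultra-normed Boolean group (equipped with the metric $(u,v)\mapsto\|u-v\|$).
   Context: An ultra-metric satisfies $d(x,z)\le\max\{d(x,y),d(y,z)\}$. A Boolean group is a group in which every non-identity element has order 2. An ultra-norm on an abelian group is a function $\|\cdot\|\ge0$ with $\|0\|=0$, $\|-u\|=\|u\|$, $\|u+v\|\le\max\{\|u\|,\|v\|\}$ and $\|u\|=0$ only for $u=0$. *)

(* Defs.v *)
From HB Require Import structures.
From mathcomp Require Import all_boot all_order all_algebra.
From mathcomp Require Import reals.
Set Implicit Arguments. Unset Strict Implicit. Unset Printing Implicit Defensive.
Import Order.TTheory GRing.Theory Num.Theory.
Local Open Scope ring_scope.

Definition is_ultrametric (R : realType) (X : Type) (d : X -> X -> R) : Prop :=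
  [/\ forall x y, 0 <= d x y,
      forall x y, d x y = 0 <-> x = y,
      forall x y, d x y = d y x &
      forall x y z, d x z <= Num.max (d x y) (d y z)].

Definition is_boolean_group (G : zmodType) : Prop :=
  forall u : G, u != 0 -> u + u = 0.

Definition is_ultranorm (R : realType) (G : zmodType) (N : G -> R) : Prop :=
  [/\ forall u, 0 <= N u,
      N 0 = 0,
      forall u, N (- u) = N u,
      forall u v, N (u + v) <= Num.max (N u) (N v) &
      forall u, N u = 0 -> u = 0].

Definition norm_closed (R : realType) (G : zmodType) (N : G -> R) (S : G -> Prop) : Prop :=
  forall g : G, (forall eps : R, 0 < eps -> exists2 s, S s & N (s - g) < eps) -> S g.

(* Main.v *)
Require Import Defs.
From HB Require Import structures.
From mathcomp Require Import all_boot all_order all_algebra.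
From mathcomp Require Import reals.
From mathcomp Require Import boolp classical_sets lra.
Import Order.TTheory GRing.Theory Num.Theory.
Local Open Scope ring_scope.
Set Implicit Arguments. Unset Strict Implicit. Unset Printing Implicit Defensive.

Section Par.
Variable Y : eqType.
Definition covers (s : seq Y) (u : Y -> bool) := forall y, u y -> y \in s.
Definition par (s : seq Y) (u : Y -> bool) : bool := \big[addb/false]_(y <- undup s) u y.

Lemma par_filter s u : par s u = \big[addb/false]_(y <- filter u (undup s)) true.
Proof.
rewrite /par big_filter [RHS]big_mkcond /=; apply: eq_bigr => y _; by case: (u y).
Qed.

Lemma par_inv s s' u : covers s u -> covers s' u -> par s u = par s' u.
Proof.
move=> Hs Hs'; rewrite !par_filter; apply: perm_big; apply: uniq_perm.
- by rewrite filter_uniq // undup_uniq.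
- by rewrite filter_uniq // undup_uniq.
move=> y; rewrite !mem_filter !mem_undup; case uy: (u y) => //=.
by rewrite (Hs _ uy) (Hs' _ uy).
Qed.

Lemma par_add s u v : par s (fun y => u y (+) v y) = par s u (+) par s v.
Proof. by rewrite /par big_split. Qed.

Lemma par0 s : par s (fun _ => false) = false.
Proof. by rewrite /par big1. Qed.

Lemma par1 y u : par [:: y] u = u y.
Proof. by rewrite /par /= big_cons big_nil addbF. Qed.

Lemma covers_cat s s' u : covers s u -> covers (s ++ s') u.
Proof. by move=> H y /H; rewrite mem_cat => ->. Qed.
Lemma covers_catr s s' u : covers s' u -> covers (s ++ s') u.
Proof. by move=> H y /H; rewrite mem_cat orbC => ->. Qed.
Lemma covers_and s u (b : Y -> bool) : covers s u -> covers s (fun y => u y && b y).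
Proof. by move=> H y /andP[/H]. Qed.
End Par.

Definition fin (Y : eqType) (u : Y -> bool) := exists s, covers s u.
Definition even (Y : eqType) (u : Y -> bool) := forall s, covers s u -> par s u = false.
Definition Gt (Y : eqType) := {u : Y -> bool | fin u /\ even u}.
HB.instance Definition _ (Y : eqType) := gen_eqMixin (Gt Y).
HB.instance Definition _ (Y : eqType) := gen_choiceMixin (Gt Y).

Section G.
Variable Y : eqType.
Lemma Gext (u v : Gt Y) : (forall y, sval u y = sval v y) -> u = v.
Proof. by case: u v => u pu [v pv] /= H; apply: eq_exist; apply: funext. Qed.

Lemma fin_even0 : fin (fun _ : Y => false) /\ even (fun _ : Y => false).
Proof. by split; [exists [::] | move=> s _; apply: par0]. Qed.
Definition zeroG : Gt Y := exist _ _ fin_even0.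

Lemma fin_even_add (u v : Gt Y) :
  fin (fun y => sval u y (+) sval v y) /\ even (fun y => sval u y (+) sval v y).
Proof.
case: u v => u [[su Hsu] eu] [v [[sv Hsv] ev]] /=; split.
  exists (su ++ sv) => y; rewrite mem_cat; case uy: (u y) => /= H.
    by rewrite Hsu.
  by rewrite Hsv ?orbT.
move=> s Hs; rewrite (par_inv Hs (_ : covers (s ++ su ++ sv) _)); last first.
  by apply: covers_cat.
rewrite par_add eu ?ev //.
  by apply: covers_catr; apply: covers_catr.
by apply: covers_catr; apply: covers_cat.
Qed.
Definition addG (u v : Gt Y) : Gt Y := exist _ _ (fin_even_add u v).

Lemma addGA : associative addG.
Proof. by move=> u v w; apply: Gext => y /=; rewrite addbA. Qed.
Lemma addGC : commutative addG.
Proof. by move=> u v; apply: Gext => y /=; rewrite addbC. Qed.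
Lemma add0G : left_id zeroG addG.
Proof. by move=> u; apply: Gext. Qed.
Lemma addNG : left_inverse zeroG id addG.
Proof. by move=> u; apply: Gext => y /=; rewrite addbb. Qed.
End G.

HB.instance Definition _ (Y : eqType) :=
  GRing.isZmodule.Build (Gt Y) (@addGA Y) (@addGC Y) (@add0G Y) (@addNG Y).

Lemma GvalD (Y : eqType) (u v : Gt Y) y : sval (u + v) y = sval u y (+) sval v y.
Proof. by []. Qed.
Lemma GvalN (Y : eqType) (u : Gt Y) : - u = u.
Proof. by []. Qed.
Lemma Gval0 (Y : eqType) y : sval (0 : Gt Y) y = false.
Proof. by []. Qed.
Lemma Gbool (Y : eqType) : is_boolean_group (Gt Y).
Proof. by move=> u _; apply: Gext => y; rewrite GvalD Gval0 addbb. Qed.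

Section Big.
Variables (R : realType) (T : eqType).
Lemma my_bigmax_ge (l : seq T) (F : T -> R) i :
  i \in l -> F i <= \big[Num.max/0]_(j <- l) F j.
Proof.
elim: l => // a l IH; rewrite in_cons big_cons le_max => /orP[/eqP->|/IH->];
  by rewrite ?lexx ?orbT.
Qed.
Lemma my_bigmax_ge0 (l : seq T) (F : T -> R) : (forall j, 0 <= F j) -> 0 <= \big[Num.max/0]_(j <- l) F j.
Proof. by move=> H; elim/big_ind: _ => // x y hx hy; rewrite le_max hx. Qed.
Lemma my_bigmin_le (l : seq T) (F : T -> R) i :
  i \in l -> \big[Num.min/1]_(j <- l) F j <= F i.
Proof.
elim: l => // a l IH; rewrite in_cons big_cons ge_min => /orP[/eqP->|/IH->];
  by rewrite ?lexx ?orbT.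
Qed.
Lemma my_bigmin_gt0 (l : seq T) (F : T -> R) :
  (forall j, 0 < F j) -> 0 < \big[Num.min/1]_(j <- l) F j.
Proof. by move=> H; elim/big_ind: _ => // x y hx hy; rewrite lt_min hx. Qed.
End Big.

Section Metric.
Variables (R : realType) (Y : eqType) (e : Y -> Y -> R).
Hypothesis He : is_ultrametric e.

Lemma e_ge0 y z : 0 <= e y z. Proof. by case: He. Qed.
Lemma e_eq0 y z : e y z = 0 <-> y = z. Proof. by case: He. Qed.
Lemma e_sym y z : e y z = e z y. Proof. by case: He. Qed.
Lemma e_ultra x y z : e x z <= Num.max (e x y) (e y z). Proof. by case: He. Qed.
Lemma e_refl y : e y y = 0. Proof. exact/e_eq0. Qed.
Lemma e_gt0 y z : y != z -> 0 < e y z.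
Proof. by move=> yz; rewrite lt_def e_ge0 andbT; apply/eqP => /e_eq0/eqP; apply/negP. Qed.
Lemma e_lt x y z r : e x y < r -> e y z < r -> e x z < r.
Proof. by move=> h1 h2; apply: le_lt_trans (e_ultra x y z) _; rewrite gt_max h1. Qed.

Definition good (u : Gt Y) (r : R) := forall c, even (fun z => sval u z && (e c z < r)).
Definition SS (u : Gt Y) : set R := fun r => 0 < r /\ forall r', r <= r' -> good u r'.
Definition NN (u : Gt Y) : R := inf (SS u).

Lemma good_add u v r : good u r -> good v r -> good (u + v) r.
Proof.
move=> gu gv c s Hs.
case: (svalP u) => [[su Hsu] _]; case: (svalP v) => [[sv Hsv] _].
have Hc : covers (s ++ su ++ sv) (fun z => sval (u + v) z && (e c z < r)).
  exact: covers_cat.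
rewrite (par_inv Hs Hc).
have -> : (fun z => sval (u + v) z && (e c z < r)) = (fun z => (sval u z && (e c z < r)) (+) (sval v z && (e c z < r))).
  apply: funext => z; rewrite GvalD.
  by case: (sval u z); case: (sval v z); case: (e c z < r).
rewrite par_add gu ?gv //.
  by do 2 apply: covers_catr; apply: covers_and.
by apply: covers_catr; apply: covers_cat; apply: covers_and.
Qed.

Lemma good0 r : good 0 r.
Proof.
move=> c s _; rewrite (_ : (fun z => _) = fun _ => false) ?par0 //.
Qed.

Lemma SS_lb u : has_lbound (SS u).
Proof. by exists 0 => r [/ltW]. Qed.

Lemma SS_ne u : (SS u !=set0)%classic.
Proof.
case: (svalP u) => [[su Hsu] eu].
set M := \big[Num.max/0]_(p <- su) \big[Num.max/0]_(q <- su) e p q.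
have HM : forall p q, sval u p -> sval u q -> e p q <= M.
  move=> p q up uq; apply: le_trans (my_bigmax_ge _ (Hsu _ up)).
  exact: (my_bigmax_ge (fun q => e p q) (Hsu _ uq)).
exists (M + 1); split.
  have : 0 <= M by apply: my_bigmax_ge0 => p; apply: my_bigmax_ge0 => q; apply: e_ge0.
  lra.
move=> r' Mr c s Hs.
have [[p /andP[up cp]]|nop] := pselect (exists p, sval u p && (e c p < r')).
  rewrite (_ : (fun z => _) = sval u) ?eu //; last first.
    apply: funext => z; case uz: (sval u z) => //=.
    apply: e_lt cp _; apply: le_lt_trans (HM _ _ up uz) _.
    by apply: lt_le_trans Mr; rewrite ltrDl ltr01.
  move=> z uz; apply: Hs; rewrite uz /=.
  apply: e_lt cp _; apply: le_lt_trans (HM _ _ up uz) _.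
  by apply: lt_le_trans Mr; rewrite ltrDl ltr01.
rewrite (_ : (fun z => _) = fun _ => false) ?par0 //.
apply: funext => z; apply/negP => h; apply: nop; by exists z.
Qed.

Lemma NN_ge0 u : 0 <= NN u.
Proof. by apply: lb_le_inf; [apply: SS_ne | move=> r [/ltW]]. Qed.

Lemma NN_lt u r : NN u < r -> exists2 s, SS u s & s < r.
Proof. exact: inf_lt (SS_ne u). Qed.

Lemma NN_le u r : SS u r -> NN u <= r.
Proof. exact: ge_inf (SS_lb u) r. Qed.

Lemma NN0 : NN 0 = 0.
Proof.
apply/eqP; rewrite eq_le NN_ge0 andbT; apply/ler_addgt0Pr => eps eps0.
rewrite add0r; apply: NN_le; split => // r' _; exact: good0.
Qed.

Lemma NN_ultra u v : NN (u + v) <= Num.max (NN u) (NN v).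
Proof.
apply/ler_addgt0Pr => eps eps0.
set m := Num.max (NN u) (NN v).
have hum : NN u <= m by rewrite le_max lexx.
have hvm : NN v <= m by rewrite le_max lexx orbT.
have [s1 [_ S1] s1m] : exists2 s, SS u s & s < m + eps by apply: NN_lt; lra.
have [s2 [_ S2] s2m] : exists2 s, SS v s & s < m + eps by apply: NN_lt; lra.
apply: NN_le; split.
  by have := NN_ge0 u; lra.
by move=> r' hr; apply: good_add; [apply: S1 | apply: S2]; lra.
Qed.

Lemma NN_def u : NN u = 0 -> u = 0.
Proof.
move=> N0; apply: Gext => y; rewrite Gval0.
case uy: (sval u y) => //; exfalso.
case: (svalP u) => [[su Hsu] eu].
set m := \big[Num.min/1]_(q <- su) (if q == y then 1 else e y q).
have m0 : 0 < m.
  apply: my_bigmin_gt0 => q; case: eqP => [_|/eqP qy]; first exact: ltr01.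
  by apply: e_gt0; rewrite eq_sym.
have [s [s0 Ss] sm] : exists2 s, SS u s & s < m by apply: NN_lt; rewrite N0.
have := Ss s (lexx s) y su (covers_and Hsu).
have Hc : covers [:: y] (fun z => sval u z && (e y z < s)).
  move=> z /andP[uz yz]; rewrite inE; apply/negPn/negP => zy.
  have := my_bigmin_le (fun q => if q == y then 1 else e y q) (Hsu _ uz).
  rewrite -/m (negPf zy) => mz.
  by have := lt_trans yz (lt_le_trans sm mz); rewrite ltxx.
rewrite (par_inv (covers_and Hsu) Hc) par1 uy e_refl s0.
by [].
Qed.

Lemma NN_ultranorm : is_ultranorm NN.
Proof.
split.
- exact: NN_ge0.
- exact: NN0.
- by [].
- exact: NN_ultra.
- exact: NN_def.
Qed.
End Metric.

Lemma par2 (Y : eqType) (y1 y2 : Y) u : y1 != y2 -> par [:: y1; y2] u = u y1 (+) u y2.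
Proof.
move=> h; rewrite /par /= inE (negPf h) /= !big_cons big_nil addbF //.
Qed.

Section Lmax.
Variable R : realType.
Lemma Lmax1 (x y z : R) : x <= y -> x <= Num.max y z.
Proof. by move=> h; rewrite le_max h. Qed.
Lemma Lmax2 (x y z : R) : x <= z -> x <= Num.max y z.
Proof. by move=> h; rewrite le_max h orbT. Qed.
End Lmax.

Section Concrete.
Variables (R : realType) (X : Type) (d : X -> X -> R).
Hypothesis Hd : is_ultrametric d.
Variable a : X.
Definition Xc := {classic X}.

Lemma d_ge0 x y : 0 <= d x y. Proof. by case: Hd. Qed.
Lemma d_eq0 x y : d x y = 0 <-> x = y. Proof. by case: Hd. Qed.
Lemma d_sym x y : d x y = d y x. Proof. by case: Hd. Qed.
Lemma d_ultra x y z : d x z <= Num.max (d x y) (d y z). Proof. by case: Hd. Qed.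
Lemma d_refl x : d x x = 0. Proof. exact/d_eq0. Qed.

Definition D (x : X) : R := Num.max 1 (d x a).
Lemma D_ge1 x : 1 <= D x. Proof. exact/Lmax1/lexx. Qed.

Definition ee (y z : option Xc) : R :=
  match y, z with
  | Some x, Some x' => d x x'
  | Some x, None => D x
  | None, Some x' => D x'
  | None, None => 0
  end.

Lemma ee_ultra : is_ultrametric ee.
Proof.
split.
- case=> [x|] [y|] //=; rewrite ?lexx ?d_ge0 //; apply: le_trans (D_ge1 _); exact: ler01.
- case=> [x|] [y|] //=; split => //.
  + by move/d_eq0 => ->.
  + by case=> ->; rewrite d_refl.
  + by move=> h; have := D_ge1 x; rewrite h ler10.
  + by move=> h; have := D_ge1 y; rewrite h ler10.
- by case=> [x|] [y|] //=; rewrite d_sym.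
- case=> [x|] [y|] [z|] /=.
  + exact: d_ultra.
  + rewrite /D ge_max; apply/andP; split; first by apply/Lmax2/Lmax1/lexx.
    apply: le_trans (d_ultra x y a) _; rewrite ge_max; apply/andP; split.
      exact/Lmax1/lexx.
    exact/Lmax2/Lmax2/lexx.
  + apply: le_trans (d_ultra x a z) _; rewrite ge_max; apply/andP; split.
      exact/Lmax1/Lmax2/lexx.
    by rewrite d_sym; apply/Lmax2/Lmax2/lexx.
  + exact/Lmax1/lexx.
  + rewrite /D ge_max; apply/andP; split; first by apply/Lmax1/Lmax1/lexx.
    apply: le_trans (d_ultra z y a) _; rewrite ge_max; apply/andP; split.
      by rewrite d_sym; apply/Lmax2/lexx.
    exact/Lmax1/Lmax2/lexx.
  + apply/Lmax1; apply: le_trans (D_ge1 _); exact: ler01.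
  + exact/Lmax2/lexx.
  + exact/Lmax1/lexx.
Qed.

Definition Y := option Xc.
Definition fv (x : X) : Y -> bool := fun y => (y == Some x) || (y == None).

Lemma fv_fin_even x : fin (fv x) /\ even (fv x).
Proof.
have Hc : covers [:: Some (x : Xc); None] (fv x).
  by move=> y; rewrite /fv !inE.
split; first by exists [:: Some (x : Xc); None].
move=> s Hs; rewrite (par_inv Hs Hc) par2 //= /fv /= eqxx //.
Qed.

Definition f (x : X) : Gt Y := exist _ _ (fv_fin_even x).
Notation N := (NN ee).

Lemma fxyE x y z : sval (f x + f y) z = (z == Some (x : Xc)) (+) (z == Some (y : Xc)).
Proof.
rewrite GvalD /= /fv; case: z => [z|] //=; by case: (Some z == Some x); case: (Some z == Some y).
Qed.

Lemma iso x y : N (f x - f y) = d x y.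
Proof.
rewrite GvalN.
have [<-|xy] := eqVneq (x : Xc) y.
  have -> : f x + f x = 0 by apply: Gext => z; rewrite GvalD addbb.
  by rewrite (NN0 ee_ultra) d_refl.
have Sxy : (Some x : Y) != Some y by apply: contra xy => /eqP [->].
have Hc c r : covers [:: Some (x : Xc); Some (y : Xc)]
    (fun z => sval (f x + f y) z && (ee c z < r)).
  move=> z /andP[]; rewrite fxyE !inE.
  by case: (z == Some (x : Xc)); case: (z == Some (y : Xc)).
have Hpar c r s : covers s (fun z => sval (f x + f y) z && (ee c z < r)) ->
    par s (fun z => sval (f x + f y) z && (ee c z < r)) =
    (ee c (Some (x : Xc)) < r) (+) (ee c (Some (y : Xc)) < r).
  move=> Hs; rewrite (par_inv Hs (Hc c r)) par2 // !fxyE eqxx (negPf Sxy).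
  by rewrite [Some (y : Xc) == _]eq_sym (negPf Sxy) eqxx.
have gd r : d x y < r -> good ee (f x + f y) r.
  move=> hr c s Hs; rewrite (Hpar c r s Hs).
  case h1: (ee c (Some (x : Xc)) < r); case h2: (ee c (Some (y : Xc)) < r) => //.
    by rewrite (e_lt ee_ultra h1 (hr : ee (Some (x : Xc)) (Some (y : Xc)) < r)) in h2.
  have hr' : ee (Some (y : Xc)) (Some (x : Xc)) < r by rewrite /= d_sym.
  by rewrite (e_lt ee_ultra h2 hr') in h1.
have ngd r : 0 < r -> r <= d x y -> ~ good ee (f x + f y) r.
  move=> r0 rd g; have := g (Some (x : Xc)) _ (Hc _ r).
  by rewrite (Hpar _ r _ (Hc _ r)) /= d_refl r0 ltNge rd.
apply/eqP; rewrite eq_le; apply/andP; split.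
  apply/ler_addgt0Pr => eps eps0; apply: NN_le; split.
    by have := d_ge0 x y; lra.
  move=> r' hr'; apply: gd; lra.
apply: lb_le_inf; first exact: (SS_ne ee_ultra).
move=> r [r0 Sr]; rewrite leNgt; apply/negP => rd.
by apply: (ngd r r0 (ltW rd)); apply: Sr.
Qed.

Lemma img_closed : norm_closed N (fun g => exists x, f x = g).
Proof.
move=> g H.
have [sg Hsg] := proj1 (svalP g).
have eg := proj2 (svalP g).
have gN : sval g None.
  have [_ [x1 <-] h1] := H 1 ltr01.
  have [r [r0 Sr] r1] := NN_lt ee_ultra h1.
  have Hc : covers [:: None] (fun z => sval (f x1 - g) z && (ee None z < r)).
    case=> [q|] //= /andP[_ hq]; exfalso.
    by have := lt_le_trans (lt_trans hq r1) (D_ge1 q); rewrite ltxx.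
  have := Sr r (lexx r) None _ Hc.
  by rewrite par1 GvalN GvalD /= r0 andbT; case: (sval g None).
set m := \big[Num.min/1]_(p <- sg) \big[Num.min/1]_(q <- sg)
           (if p == q then 1 else ee p q).
have m0 : 0 < m.
  apply: my_bigmin_gt0 => p; apply: my_bigmin_gt0 => q.
  case: eqP => [_|/eqP pq]; first exact: ltr01.
  by apply: (@e_gt0 _ _ ee ee_ultra).
have mpq p q : sval g p -> sval g q -> p != q -> m <= ee p q.
  move=> gp gq pq; rewrite /m.
  apply: le_trans (my_bigmin_le (fun p0 => \big[Num.min/1]_(q0 <- sg) (if p0 == q0 then 1 else ee p0 q0)) (Hsg _ gp)) _.
  apply: le_trans (my_bigmin_le (fun q0 => if p == q0 then 1 else ee p q0) (Hsg _ gq)) _.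
  by rewrite (negPf pq).
have eps0 : 0 < Num.min 1 m by rewrite lt_min ltr01.
have [_ [x <-] hx] := H _ eps0.
have [r [r0 Sr] rlt] := NN_lt ee_ultra hx.
move: rlt; rewrite lt_min => /andP[r1 rm].
have gr := Sr r (lexx r).
have cl p : sval g (Some p) -> d x p < r.
  move=> gp; rewrite ltNge; apply/negP => rp.
  have Hc : covers [:: Some p] (fun z => sval (f x - g) z && (ee (Some p) z < r)).
    case=> [q|] /=; last first.
      move=> /andP[_ hq]; exfalso.
      by have := lt_le_trans (lt_trans hq r1) (D_ge1 p); rewrite ltxx.
    rewrite /fv /= => /andP[hq pq]; rewrite inE.
    have [//|qp] := eqVneq (Some q : Y) (Some p).
    case qx: (Some q == Some (x : Xc)) hq => /= hq.
      move/eqP: qx => [qx]; subst q.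
      by rewrite d_sym ltNge rp in pq.
    have := mpq _ _ gp hq; rewrite eq_sym qp => /(_ isT) /= mp.
    by have := lt_le_trans (lt_trans pq rm) mp; rewrite ltxx.
  have := gr (Some p) _ Hc; rewrite par1 GvalN GvalD /= /fv /= d_refl r0 andbT.
  case px: (Some p == Some (x : Xc)); last by rewrite gp.
  move/eqP: px => [px]; subst p.
  by rewrite d_refl leNgt r0 in rp.
have [[p gp]|nop] := pselect (exists p : Xc, sval g (Some p)); last first.
  exfalso.
  have Hc : covers [:: None] (sval g).
    case=> [q|] // gq; exfalso; apply: nop; by exists q.
  by have := eg _ Hc; rewrite par1 gN.
have uniq q : sval g (Some q) -> q = p.
  move=> gq; apply/eqP; apply/negPn/negP => qp.
  have Sqp : (Some q : Y) != Some p by apply: contra qp => /eqP [->].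
  have := mpq _ _ gq gp Sqp => /= mqp.
  have : d q p < r.
    apply: le_lt_trans (d_ultra q x p) _; rewrite gt_max (cl _ gp) andbT.
    by rewrite d_sym cl.
  by move=> h; have := lt_le_trans (lt_trans h rm) mqp; rewrite ltxx.
exists p; apply: Gext => z; case: z => [q|] /=; rewrite /fv /=; last by rewrite gN.
rewrite orbF; case gq: (sval g (Some q)).
  by rewrite (uniq _ gq) eqxx.
apply/negbTE/negP => /eqP [qp]; subst q; by rewrite gp in gq.
Qed.
End Concrete.
Theorem corollary8p4 (R : realType) (X : Type) (d : X -> X -> R) :
  is_ultrametric d ->
  exists (G : zmodType) (N : G -> R) (f : X -> G),
    [/\ is_boolean_group G,
        is_ultranorm N,
        (forall x y, N (f x - f y) = d x y) &
        norm_closed N (fun g => exists x, f x = g)].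
Proof.
move=> Hd.
have [[a _]|nX] := pselect (exists a : X, True).
  exists (Gt (Y X)), (NN (ee d a)), (@f X); split.
  - exact: Gbool.
  - exact: NN_ultranorm (ee_ultra Hd a).
  - exact: iso Hd a.
  - exact: img_closed Hd a.
exists (Gt (classicType X)), (fun _ => 0), (fun _ => 0); split.
- exact: Gbool.
- split => //; first by move=> u v; rewrite le_max lexx.
  move=> u _; apply: Gext => y; exfalso; apply: nX; by exists y.
- move=> x; exfalso; apply: nX; by exists x.
- move=> g H; have [_ [x _] _] := H 1 ltr01; exfalso; apply: nX; by exists x.
Qed.
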